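(* Let $n\ge2$, let $a_1,\dots,a_n$ be real numbers, $C(t)=\sum_{j=1}^n a_j\cos jt$, $S(t)=\sum_{j=1}^n a_j\sin jt$. Let $1\le m<n$ and let $t_1,\dots,t_m\in(0,\pi)$ be pairwise distinct with $$S(t_1)=\dots=S(t_m)=0,\qquad C(t_1)=\dots=C(t_m).$$ Define numbers $a^{(j)}_k$ recursively: $a^{(0)}_k=a_k$ ($k=1,\dots,n$), and for $j=1,\dots,m$ set $a^{(j)}_{n-j+1}=a^{(j)}_{n-j+2}=0$ and, for $k=n-j+1,n-j,\dots,2$ (in this order), $$a^{(j)}_{k-1}=2a^{(j-1)}_k+2\cos t_j\,a^{(j)}_k-a^{(j)}_{k+1}.$$ Then $$C(t_1)=\dots=C(t_m)=-\frac{a^{(m)}_m}{2^m}.$$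
   Context: The recursion determines $a^{(m)}_m$ uniquely from $a_2,\dots,a_n$ and $t_1,\dots,t_m$. *)

(* Defs.v *)
From Stdlib Require Import Reals Lra Lia.
Open Scope R_scope.

Definition Csum (a : nat -> R) (n : nat) (t : R) : R :=
  sum_f 1 n (fun j => a j * cos (INR j * t)).

Definition Ssum (a : nat -> R) (n : nat) (t : R) : R :=
  sum_f 1 n (fun j => a j * sin (INR j * t)).

(* With N = n-j+2 (top index of level j),
   write b d := a^{(j)}_{N-d}.  Then b 0 = b 1 = 0 and
   b (d+2) = 2 a^{(j-1)}_{N-(d+1)} + 2 c b (d+1) - b d,  c = cos t_j.
   [step prev c N d] returns the pair (b d, b (d+1)). *)
Fixpoint step (prev : nat -> R) (c : R) (N : nat) (d : nat) : R * R :=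
  match d with
  | O => (0, 0)
  | S d' =>
      let p := step prev c N d' in
      (snd p, 2 * prev (N - S d')%nat + 2 * c * snd p - fst p)
  end.

(* coef a t n j k = a^{(j)}_k  (meaningful for 1 <= k <= n-j+2, j <= m < n).
   Level j+1 has top index N = n-(j+1)+2 = n+1-j. *)
Fixpoint coef (a : nat -> R) (t : nat -> R) (n : nat) (j : nat) : nat -> R :=
  match j with
  | O => a
  | S j' => fun k =>
      let N := (n + 1 - j')%nat in
      fst (step (coef a t n j') (cos (t (S j'))) N (N - k)%nat)
  end.

(* Main.v *)
Require Import Defs.
From Stdlib Require Import Reals Lra Lia.
Open Scope R_scope.

Fixpoint sm (f : nat -> R) (M : nat) : R :=
  match M with O => 0 | S M' => sm f M' + f M end.

Lemma sum_f_sm f n : (1 <= n)%nat -> sum_f 1 n f = sm f n.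
Proof.
  induction n as [|n IH]; intros H; [lia|].
  destruct n as [|n].
  - unfold sum_f; simpl. ring.
  - unfold sum_f in *. replace (S (S n) - 1)%nat with (S n) by lia.
    replace (S n - 1)%nat with n in IH by lia.
    change (sum_f_R0 (fun x : nat => f (x + 1)%nat) (S n)) with
      (sum_f_R0 (fun x : nat => f (x + 1)%nat) n + f (S n + 1)%nat).
    rewrite IH by lia. change (sm f (S (S n))) with (sm f (S n) + f (S (S n))).
    replace (S n + 1)%nat with (S (S n)) by lia. ring.
Qed.

Lemma sm_ext f g M : (forall k, f k = g k) -> sm f M = sm g M.
Proof. intros H; induction M; simpl; [reflexivity|rewrite IHM, H; ring]. Qed.

Lemma sm_scale f c M : sm (fun k => c * f k) M = c * sm f M.
Proof. induction M; simpl; [ring|rewrite IHM; ring]. Qed.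

Lemma trig_sin y t : sin (y + t) + sin (y - t) = 2 * cos t * sin y.
Proof. rewrite sin_plus, sin_minus. ring. Qed.
Lemma trig_cos y t : cos (y + t) + cos (y - t) = 2 * cos t * cos y.
Proof. rewrite cos_plus, cos_minus. ring. Qed.

Lemma tele (b p : nat -> R) c t M :
  (forall k, (1 <= k <= M)%nat -> 2 * p k = b (k-1)%nat + b (S k) - 2*c*b k) ->
  sm (fun k => 2 * p k * sin (INR k * t)) M - b 0%nat * sin t
    - 2*(cos t - c) * sm (fun k => b k * sin (INR k * t)) M
  = b (S M) * sin (INR M * t) - b M * sin (INR (S M) * t)
  /\
  sm (fun k => 2 * p k * cos (INR k * t)) M - b 0%nat * cos t + b 1%nat
    - 2*(cos t - c) * sm (fun k => b k * cos (INR k * t)) M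
  = b (S M) * cos (INR M * t) - b M * cos (INR (S M) * t).
Proof.
  induction M as [|M IH]; intros H.
  - simpl. rewrite Rmult_0_l, sin_0, cos_0, Rmult_1_l. split; ring.
  - destruct IH as [IH1 IH2]. { intros k Hk. apply H. lia. }
    pose proof (H (S M) ltac:(lia)) as HM. replace (S M - 1)%nat with M in HM by lia.
    cbn [sm].
    set (y := INR (S M) * t) in *.
    assert (E1 : INR (S (S M)) * t = y + t) by (unfold y; rewrite (S_INR (S M)); ring).
    assert (E2 : INR M * t = y - t) by (unfold y; rewrite (S_INR M); ring).
    rewrite E2 in IH1, IH2. rewrite E1.
    pose proof (trig_sin y t). pose proof (trig_cos y t).
    split.
    + transitivity (b (S M) * sin (y - t) - b M * sin y
        + 2 * p (S M) * sin y - 2 * (cos t - c) * (b (S M) * sin y)); [|rewrite HM]. 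
      * rewrite <- IH1. ring.
      * replace (b (S (S M)) * sin y - b (S M) * sin (y + t)) with
          (b (S (S M)) * sin y - b (S M) * (2 * cos t * sin y - sin (y - t))) by (rewrite <- H0; ring).
        ring.
    + transitivity (b (S M) * cos (y - t) - b M * cos y
        + 2 * p (S M) * cos y - 2 * (cos t - c) * (b (S M) * cos y)); [|rewrite HM].
      * rewrite <- IH2. ring.
      * replace (b (S (S M)) * cos y - b (S M) * cos (y + t)) with
          (b (S (S M)) * cos y - b (S M) * (2 * cos t * cos y - cos (y - t))) by (rewrite <- H1; ring).
        ring.
Qed.

Lemma step_rec prev c N d :
  fst (step prev c N (S (S d))) =
  2 * prev (N - S d)%nat + 2 * c * fst (step prev c N (S d)) - fst (step prev c N d).
Proof. reflexivity. Qed.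

Section Main.
Variables (n : nat) (a t : nat -> R).

Lemma coef_rec j k : (1 <= k <= n - j)%nat ->
  2 * coef a t n j k = coef a t n (S j) (k-1)%nat + coef a t n (S j) (S k)
     - 2 * cos (t (S j)) * coef a t n (S j) k.
Proof.
  intros Hk. simpl.
  set (N := (n + 1 - j)%nat).
  remember (N - k - 1)%nat as d eqn:Ed.
  assert (E1 : (N - (k - 1))%nat = S (S d)) by (unfold N in *; lia).
  assert (E2 : (N - k)%nat = S d) by (unfold N in *; lia).
  assert (E3 : (N - S k)%nat = d) by (unfold N in *; lia).
  assert (E4 : (N - S d)%nat = k) by (unfold N in *; lia).
  rewrite E1, E2, E3, step_rec, E4. ring.
Qed.

Lemma coef_zero j k : (n + 1 - j - k <= 1)%nat -> coef a t n (S j) k = 0.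
Proof.
  intros H. simpl. destruct (n + 1 - j - k)%nat as [|[|d]]; [reflexivity|reflexivity|lia].
Qed.

Definition Sj j x := sm (fun k => coef a t n j k * sin (INR k * x)) (n - j).
Definition Cj j x := sm (fun k => coef a t n j k * cos (INR k * x)) (n - j).

Lemma level_id j x : (j < n)%nat ->
  2 * Sj j x - coef a t n (S j) 0 * sin x - 2 * (cos x - cos (t (S j))) * Sj (S j) x = 0 /\
  2 * Cj j x - coef a t n (S j) 0 * cos x + coef a t n (S j) 1
     - 2 * (cos x - cos (t (S j))) * Cj (S j) x = 0.
Proof.
  intros Hj.
  destruct (tele (coef a t n (S j)) (coef a t n j) (cos (t (S j))) x (n - j)) as [T1 T2].
  { intros k Hk. rewrite coef_rec by lia. ring. }
  rewrite (coef_zero j (S (n - j))) in T1, T2 by lia.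
  rewrite (coef_zero j (n - j)) in T1, T2 by lia.
  replace (n - j)%nat with (S (n - S j)) in T1, T2 by lia.
  cbn [sm] in T1, T2.
  replace (S (n - S j)) with (n - j)%nat in T1, T2 by lia.
  rewrite (coef_zero j (n - j)) in T1, T2 by lia.
  unfold Sj, Cj.
  replace (n - j)%nat with (S (n - S j)) by lia. cbn [sm].
  replace (S (n - S j)) with (n - j)%nat by lia.
  rewrite (sm_ext (fun k => 2 * coef a t n j k * sin (INR k * x))
     (fun k => 2 * (coef a t n j k * sin (INR k * x)))) in T1 by (intros; ring).
  rewrite (sm_ext (fun k => 2 * coef a t n j k * cos (INR k * x))
     (fun k => 2 * (coef a t n j k * cos (INR k * x)))) in T2 by (intros; ring).
  rewrite sm_scale in T1, T2. cbn [sm] in T1, T2.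
  split; lra.
Qed.

End Main.

Theorem corollary3 (n m : nat) (a : nat -> R) (t : nat -> R)
  (hn : (2 <= n)%nat) (hm1 : (1 <= m)%nat) (hmn : (m < n)%nat)
  (ht : forall i, (1 <= i <= m)%nat -> 0 < t i < PI)
  (hdist : forall i j, (1 <= i <= m)%nat -> (1 <= j <= m)%nat -> i <> j -> t i <> t j)
  (hS : forall i, (1 <= i <= m)%nat -> Ssum a n (t i) = 0)
  (hC : forall i, (1 <= i <= m)%nat -> Csum a n (t i) = Csum a n (t 1%nat)) :
  forall i, (1 <= i <= m)%nat ->
    Csum a n (t i) = - coef a t n m m / 2 ^ m.
Proof.
  set (c0 := Csum a n (t 1%nat)).
  set (v := fun j : nat => match j with O => c0 | _ => 0 end).
  assert (Inv : forall j, (j <= m)%nat ->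
    (forall i, (j < i <= m)%nat -> Sj n a t j (t i) = 0 /\ Cj n a t j (t i) = v j) /\
    ((1 <= j)%nat -> (forall k, (k < j)%nat -> coef a t n j k = 0) /\
                     coef a t n j j = - 2 ^ j * c0)).
  { induction j as [|j IH]; intros Hj.
    - split; [|lia]. intros i Hi. unfold Sj, Cj. rewrite Nat.sub_0_r.
      rewrite <- !sum_f_sm by lia. split.
      + apply hS; lia.
      + apply hC; lia.
    - destruct (IH ltac:(lia)) as [IH1 IH2].
      assert (cosdiff : forall i, (S j < i <= m)%nat -> cos (t i) - cos (t (S j)) <> 0).
      { intros i Hi E. apply (hdist i (S j)); try lia.
        pose proof (ht i ltac:(lia)). pose proof (ht (S j) ltac:(lia)).
        apply cos_inj; lra. }
      destruct (IH1 (S j) ltac:(lia)) as [S0 C0].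
      destruct (level_id n a t j (t (S j)) ltac:(lia)) as [L1 L2].
      rewrite S0 in L1. rewrite C0 in L2. rewrite Rminus_diag in L1, L2.
      pose proof (ht (S j) ltac:(lia)) as [ht1 ht2].
      pose proof (sin_gt_0 _ ht1 ht2).
      assert (b0 : coef a t n (S j) 0 = 0) by nra.
      rewrite b0 in L2.
      assert (b1 : coef a t n (S j) 1 = - 2 * v j) by lra.
      split.
      + intros i Hi.
        destruct (IH1 i ltac:(lia)) as [Si Ci].
        destruct (level_id n a t j (t i) ltac:(lia)) as [M1 M2].
        rewrite Si, b0 in M1. rewrite Ci, b0, b1 in M2.
        pose proof (cosdiff i Hi).
        simpl v.
        split.
        * apply (Rmult_eq_reg_l (2 * (cos (t i) - cos (t (S j))))); [lra|]. lra.
        * apply (Rmult_eq_reg_l (2 * (cos (t i) - cos (t (S j))))); [lra|]. lra.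
      + intros _. destruct j as [|j'].
        * split.
          -- intros k Hk. replace k with 0%nat by lia. exact b0.
          -- rewrite b1. simpl. ring.
        * destruct (IH2 ltac:(lia)) as [Z P].
          assert (b1' : coef a t n (S (S j')) 1 = 0) by (rewrite b1; simpl; ring).
          assert (Cl : forall k, (S k < S (S j'))%nat ->
                    coef a t n (S (S j')) k = 0 /\ coef a t n (S (S j')) (S k) = 0).
          { induction k as [|k IHk]; intros Hk; [split; assumption|].
            destruct (IHk ltac:(lia)) as [Ek ESk]. split; [exact ESk|].
            destruct (Nat.le_gt_cases (S k) (n - S j')) as [Hle|Hgt].
            - pose proof (coef_rec n a t (S j') (S k) ltac:(lia)) as R.
              rewrite (Z (S k)) in R by lia.
              replace (S k - 1)%nat with k in R by lia. rewrite Ek, ESk in R. lra.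
            - apply coef_zero. lia. }
          split.
          -- intros k Hk. destruct k as [|k]; [exact b0|]. apply (Cl k). lia.
          -- destruct (Nat.le_gt_cases (S j') (n - S j')) as [Hle|Hgt].
             ++ pose proof (coef_rec n a t (S j') (S j') ltac:(lia)) as R.
                replace (S j' - 1)%nat with j' in R by lia.
                destruct (Cl j' ltac:(lia)) as [E1 E2].
                rewrite E1, E2, P in R. rewrite Rmult_0_r in R. change (2 ^ S (S j')) with (2 * 2 ^ S j'). lra.
             ++ rewrite coef_zero by lia.
                assert (Pz : coef a t n (S j') (S j') = 0) by (apply coef_zero; lia).
                rewrite Pz in P. change (2 ^ S (S j')) with (2 * 2 ^ S j'). lra. }
  intros i Hi.
  destruct (Inv m ltac:(lia)) as [_ [_ Em]]; [lia|].
  rewrite hC by lia. fold c0. rewrite Em. field. apply pow_nonzero. lra.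
Qed.
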